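(* Let $\widehat\Gamma$ be a Harnack graph with controlled, uniformly lazy weights, let $K$ be a set of vertices, and suppose $\Gamma:=\widehat\Gamma\setminus K$ is an infinite inner uniform subgraph of $\widehat\Gamma$. If $\widehat\Gamma$ is $S$-transient with respect to $K$, then $h:=1-\psi_K$ is a harmonic profile of $\Gamma$. If $\widehat\Gamma$ is uniformly $S$-transient with respect to $K$, then there is $\varepsilon_*>0$ such that $\varepsilon_*\le 1-\psi_K(x)\le 1$ for all $x\in\Gamma$ (so the profile satisfies $h\approx1$).
   Context: $\widehat{\Gamma}$: infinite simple connected graph, symmetric edge weights $\mu_{xy}$ ($\ne0$ iff $x\sim y$), vertex weights $\pi>0$ with $\sum_{y\sim x}\mu_{xy}\le\pi(x)$; $\mathcal{K}(x,y)=\mu_{xy}/\pi(x)$ for $x\ne y$, $\mathcal{K}(x,x)=1-\sum_{z\sim x}\mu_{xz}/\pi(x)$; controlled weights ($\mu_{xy}/\pi(x)\ge1/C_c$ for $y\sim x$) and uniformly lazy ($\mathcal{K}(x,x)\ge C_e>0$). Harnack graph: $p(n,x,y)=\mathcal{K}^n(x,y)/\pi(y)$ satisfies $\frac{c_1}{V(x,\sqrt n)}e^{-d(x,y)^2/(c_2n)}\le p(n,x,y)\le\frac{c_3}{V(x,\sqrt n)}e^{-d(x,y)^2/(c_4 n)}$ for $n\ge d(x,y)$, with $d$ the graph distance and $V(x,r)=\pi(B(x,r))$. $\Gamma$ is the subgraph induced on the complement of $K$, $d_\Gamma$ its intrinsic graph distance; $\partial\Gamma$ is the set of vertices outside $\Gamma$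 adjacent to $\Gamma$. $\Gamma$ is inner uniform if there are $c_u,C_U>0$ such that any $x,y\in\Gamma$ are joined by a path $x=x_0,\dots,x_k=y$ in $\Gamma$ with $k\le C_U d_\Gamma(x,y)$ and $d(x_j,\partial\Gamma)\ge c_u(1+\min\{j,k-j\})$ for all $j$. A harmonic profile of $\Gamma$ is a function $h$ with $h>0$ on $\Gamma$, $h=0$ off $\Gamma$, and $h(x)=\sum_{y}\mathcal{K}(x,y)h(y)$ for all $x\in\Gamma$. $\psi_K(x)=\mathbb{P}^x(\tau_K<\infty)$ with $\tau_K$ the first hitting time of $K$. $\widehat\Gamma$ is $S$-transient w.r.t. $K$ if $\psi_K(x)<1$ for some $x$; uniformly $S$-transient if there are $L,\varepsilon>0$ with $\psi_K(x)\le1-\varepsilon$ whenever $d(x,K)\ge L$. *)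

(* Defs.v *)
From mathcomp Require Import all_boot all_order all_algebra.
From mathcomp Require Import all_classical all_reals all_analysis.
Import Order.TTheory GRing.Theory Num.Theory.
Set Implicit Arguments. Unset Strict Implicit. Unset Printing Implicit Defensive.
Local Open Scope classical_set_scope.
Local Open Scope ring_scope.

Section GraphDefs.
Context {R : realType} {V : choiceType}.
Implicit Types (mu : V -> V -> R) (pi : V -> R) (K : set V).

Definition adj mu (x y : V) : Prop := mu x y != 0.

Definition walk (A : V -> V -> Prop) (k : nat) (x y : V) (p : nat -> V) : Prop :=
  p 0%N = x /\ p k = y /\ forall i, (i < k)%N -> A (p i) (p i.+1).

Definition joined (A : V -> V -> Prop) (k : nat) (x y : V) : Prop :=
  exists p, walk A k x y p.

Lemma joined_ex (A : V -> V -> Prop) x y :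
  (exists k, joined A k x y) -> exists k, `[< joined A k x y >].
Proof. by case=> k hk; exists k; apply/asboolP. Qed.

(* graph distance w.r.t. A: least length of a walk (0 if no walk exists) *)
Definition gdist (A : V -> V -> Prop) (x y : V) : nat :=
  match pselect (exists k, joined A k x y) with
  | left e => ex_minn (joined_ex e)
  | right _ => 0%N
  end.

Definition dist mu := gdist (adj mu).

Definition Kxy mu pi (x y : V) : R :=
  if x == y then 1 - fine (\esum_(z in [set z | adj mu x z]) (mu x z)%:E) / pi x
  else mu x y / pi x.

Definition Kop mu pi (f : V -> R) (x : V) : R :=
  fine (\esum_(y in [set: V]) (Kxy mu pi x y * f y)%:E).

Fixpoint Kpow mu pi (n : nat) : V -> V -> R :=
  match n with
  | 0%N => fun x y => (x == y)%:R
  | n'.+1 => fun x y => Kop mu pi (fun z => Kpow mu pi n' z y) x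
  end.

Definition heat mu pi n x y : R := Kpow mu pi n x y / pi y.

Definition vol mu pi (x : V) (r : R) : R :=
  fine (\esum_(y in [set y | ((dist mu x y)%:R : R) <= r]) (pi y)%:E).

Definition weighted_graph mu pi : Prop :=
  (forall x y, mu x y = mu y x) /\
  (forall x y, 0 <= mu x y) /\
  (forall x, mu x x = 0) /\
  (forall x, 0 < pi x) /\
  (forall x, (\esum_(y in [set y | adj mu x y]) (mu x y)%:E <= (pi x)%:E)%E) /\
  (forall x y, exists k, joined (adj mu) k x y) /\
  infinite_set [set: V].

Definition controlled mu pi : Prop :=
  exists Cc : R, 0 < Cc /\ forall x y, adj mu x y -> 1 / Cc <= mu x y / pi x.

Definition uniformly_lazy mu pi : Prop :=
  exists Ce : R, 0 < Ce /\ forall x, Ce <= Kxy mu pi x x.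

Definition harnack mu pi : Prop :=
  exists c1 c2 c3 c4 : R, [/\ 0 < c1, 0 < c2, 0 < c3, 0 < c4 &
    forall (n : nat) (x y : V), (dist mu x y <= n)%N ->
      c1 / vol mu pi x (Num.sqrt n%:R)
         * expR (- ((dist mu x y)%:R ^+ 2) / (c2 * n%:R))
        <= heat mu pi n x y
      /\ heat mu pi n x y <=
      c3 / vol mu pi x (Num.sqrt n%:R)
         * expR (- ((dist mu x y)%:R ^+ 2) / (c4 * n%:R))].

(* Gamma = complement of K; its induced adjacency, intrinsic distance, boundary *)
Definition adjG mu K (a b : V) : Prop := [/\ adj mu a b, ~ K a & ~ K b].
Definition distG mu K := gdist (adjG mu K).
Definition bdry mu K : set V := [set z | K z /\ exists x, ~ K x /\ adj mu z x].

Definition inner_uniform mu K : Prop :=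
  exists cu CU : R, [/\ 0 < cu, 0 < CU &
    forall x y, ~ K x -> ~ K y ->
      exists (k : nat) (p : nat -> V), [/\ walk (adjG mu K) k x y p,
        (k%:R <= CU * (distG mu K x y)%:R) &
        forall j, (j <= k)%N -> forall z, bdry mu K z ->
          cu * (1 + (minn j (k - j))%:R) <= (dist mu (p j) z)%:R]].

Definition harmonic_profile mu pi K (h : V -> R) : Prop :=
  [/\ (forall x, ~ K x -> 0 < h x),
      (forall x, K x -> h x = 0)
    & (forall x, ~ K x -> h x = Kop mu pi h x)].

(* hitP n x = P^x(tau_K <= n), tau_K = inf {n >= 0 : X_n in K},
   computed by first-step analysis *)
Fixpoint hitP mu pi K (n : nat) : V -> R :=
  match n with
  | 0%N => fun x => if `[< K x >] then 1 else 0
  | n'.+1 => fun x => if `[< K x >] then 1 else Kop mu pi (hitP mu pi K n') x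
  end.

(* psi_K(x) = P^x(tau_K < oo) = sup_n P^x(tau_K <= n) *)
Definition psiK mu pi K (x : V) : R := sup [set hitP mu pi K n x | n in [set: nat]].

Definition S_transient mu pi K : Prop := exists x, psiK mu pi K x < 1.

Definition unif_S_transient mu pi K : Prop :=
  exists L eps : R, [/\ 0 < L, 0 < eps &
    forall x, (forall z, K z -> L <= (dist mu x z)%:R) -> psiK mu pi K x <= 1 - eps].

End GraphDefs.

(* Main.v *)
Require Import Defs.
From mathcomp Require Import all_boot all_order all_algebra.
From mathcomp Require Import all_classical all_reals all_analysis.
From mathcomp Require Import finmap.
Import numFieldNormedType.Exports.
From mathcomp Require Import lra zify.
Import Order.TTheory GRing.Theory Num.Theory.
Local Open Scope classical_set_scope.
Local Open Scope ring_scope.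

Section Setting.
Variables (R : realType) (V : choiceType) (mu : V -> V -> R) (pi : V -> R).
Hypothesis msym : forall x y, mu x y = mu y x.
Hypothesis mge0 : forall x y, 0 <= mu x y.
Hypothesis mxx : forall x, mu x x = 0.
Hypothesis pigt0 : forall x, 0 < pi x.
Hypothesis mle : forall x,
  (\esum_(y in [set y | adj mu x y]) (mu x y)%:E <= (pi x)%:E)%E.
Variable Cc : R.
Hypothesis Ccgt0 : 0 < Cc.
Hypothesis ctrl : forall x y, adj mu x y -> 1 / Cc <= mu x y / pi x.
Variable Ce : R.
Hypothesis Cegt0 : 0 < Ce.
Hypothesis lazy : forall x, Ce <= Kxy mu pi x x.

Let N x := [set y | adj mu x y].

Lemma sum_lb (T : eqType) (s : seq T) (f : T -> R) c :
  (forall y, y \in s -> c <= f y) -> c *+ size s <= \sum_(y <- s) f y.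
Proof.
elim: s => [|a s IH] h; first by rewrite big_nil.
rewrite big_cons /= mulrS lerD //; first by apply: h; rewrite inE eqxx.
by apply: IH => y ys; apply: h; rewrite inE ys orbT.
Qed.
Arguments sum_lb {T s f c}.

Lemma N_fin x : finite_set (N x).
Proof.
apply: contrapT => inf.
have [B BN szB] := infinite_set_fset (Num.Def.archi_bound Cc).+1 inf.
have h1 : (\sum_(y <- finmap.enum_fset B) mu x y <= pi x).
  rewrite -lee_fin -sumEFin; apply: le_trans (mle x).
  apply: esum_ge; exists [set` B]; first by split.
  by rewrite fsbig_finite //= set_fsetK.
have h2 : forall y, y \in finmap.enum_fset B -> pi x / Cc <= mu x y.
  move=> y yB; have h := ctrl x y (BN y yB).
  have -> : mu x y = pi x * (mu x y / pi x).
    by rewrite mulrCA mulfV ?mulr1 // gt_eqF.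
  by apply: le_trans (ler_wpM2l (ltW (pigt0 x)) h); rewrite mul1r.
have h3 := le_trans (sum_lb h2) h1.
have : (size (finmap.enum_fset B))%:R <= Cc.
  have h : (size (finmap.enum_fset B))%:R * (pi x / Cc) <= pi x by rewrite mulr_natl.
  move: h; rewrite mulrA ler_pdivrMr // => h.
  by rewrite -(ler_pM2r (pigt0 x)) (mulrC Cc).
have := archi_boundP (ltW Ccgt0).
move=> h4 h5; have := le_lt_trans h5 h4; rewrite ltr_nat.
by rewrite ltnNge (ltnW szB).
Qed.

Let S x := x |` N x.
Let s x := finmap.enum_fset (fset_set (S x)).

Lemma S_fin x : finite_set (S x).
Proof. by rewrite /S finite_setU; split; [exact: finite_set1 | exact: N_fin]. Qed.

Lemma mem_s x y : y \in s x <-> (y = x \/ adj mu x y).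
Proof. by rewrite /s in_fset_set ?in_setE //; exact: S_fin. Qed.

Lemma uniq_s x : uniq (s x).
Proof. exact: finmap.fset_uniq. Qed.

Lemma adj_neq x y : adj mu x y -> x != y.
Proof. by move=> h; apply/eqP => e; move: h; rewrite /adj e mxx eqxx. Qed.

Lemma Kxy_off x y : x != y -> Kxy mu pi x y = mu x y / pi x.
Proof. by move=> h; rewrite /Kxy (negbTE h). Qed.

Lemma Kxy_ge0 x y : 0 <= Kxy mu pi x y.
Proof.
case: (eqVneq x y) => [<-|h]; first exact: le_trans (ltW Cegt0) (lazy x).
by rewrite Kxy_off // divr_ge0 // ltW.
Qed.

Lemma Kxy_adj_gt0 x y : adj mu x y -> 0 < Kxy mu pi x y.
Proof.
move=> h; rewrite Kxy_off ?adj_neq // divr_gt0 //.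
by rewrite lt_def mge0 andbT; exact: h.
Qed.

Lemma Kxy_out x y : ~ (y = x \/ adj mu x y) -> Kxy mu pi x y = 0.
Proof.
move=> h; have xy : x != y by apply/eqP => e; apply: h; left.
rewrite Kxy_off //.
have : ~ adj mu x y by move=> a; apply: h; right.
by rewrite /adj => /negP; rewrite negbK => /eqP ->; rewrite mul0r.
Qed.

Lemma Kop_seq f x : (forall y, 0 <= f y) ->
  Kop mu pi f x = \sum_(y <- s x) Kxy mu pi x y * f y.
Proof.
move=> f0; rewrite /Kop.
have -> : \esum_(y in [set: V]) (Kxy mu pi x y * f y)%:E =
          \esum_(y in S x) (Kxy mu pi x y * f y)%:E.
  rewrite [RHS]esum_mkcond; apply: eq_esum => y _.
  case: ifPn => // /negP yS.
  rewrite Kxy_out ?mul0r //; move=> h; apply: yS; rewrite in_setE; exact: h.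
rewrite esum_fset; last 2 first.
- exact: S_fin.
- by move=> y _; rewrite lee_fin mulr_ge0 // Kxy_ge0.
rewrite fsumEFin //=; last exact: S_fin.
by rewrite fsbig_finite //; exact: S_fin.
Qed.

Lemma setU1D (x : V) (A : set V) : ~ A x -> (x |` A) `\ x = A.
Proof.
move=> nA; apply/seteqP; split=> y /=.
- by move=> [[->|//] /= ].
- by move=> Ay; split; [right | move=> /= yx; apply: nA; rewrite -yx].
Qed.

Lemma Mx x : fine (\esum_(y in [set y | adj mu x y]) (mu x y)%:E)
   = \sum_(y <- s x) mu x y.
Proof.
rewrite esum_fset; last 2 first.
- exact: N_fin.
- by move=> y _; rewrite lee_fin.
rewrite fsumEFin /=; last exact: N_fin.
have -> : \sum_(y <- s x) mu x y = \sum_(y \in S x) mu x y.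
  by rewrite fsbig_finite //; exact: S_fin.
rewrite [RHS](fsbigD1 x) ?S_fin //=; last by left.
rewrite mxx add0r /S setU1D //.
by move=> /adj_neq; rewrite eqxx.
exact: S_fin.
Qed.

Lemma Ksum x : \sum_(y <- s x) Kxy mu pi x y = 1.
Proof.
have xs : x \in s x by apply/mem_s; left.
rewrite (bigD1_seq x xs (uniq_s x)) /=.
rewrite {1}/Kxy eqxx Mx.
have -> : \sum_(y <- s x | y != x) Kxy mu pi x y =
          (\sum_(y <- s x | y != x) mu x y) / pi x.
  by rewrite mulr_suml; apply: eq_bigr => y yx; rewrite Kxy_off // eq_sym.
have -> : \sum_(y <- s x) mu x y = \sum_(y <- s x | y != x) mu x y.
  by rewrite (bigD1_seq x xs (uniq_s x)) /= mxx add0r.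
by rewrite subrK.
Qed.

Variable K : set V.

Lemma hit_bnd n x : 0 <= hitP mu pi K n x <= 1.
Proof.
elim: n x => [|n IH] x /=.
  by case: ifP => _; rewrite ?ler01 ?lexx.
case: ifP => _; first by rewrite ler01 lexx.
rewrite Kop_seq; last by move=> y; case/andP: (IH y).
apply/andP; split.
  by apply: sumr_ge0 => y _; rewrite mulr_ge0 ?Kxy_ge0 //; case/andP: (IH y).
rewrite -(Ksum x); apply: ler_sum => y _.
by rewrite ler_piMr ?Kxy_ge0 //; case/andP: (IH y).
Qed.

Lemma hit_mono n x : hitP mu pi K n x <= hitP mu pi K n.+1 x.
Proof.
elim: n x => [|n IH] x.
  have := hit_bnd 1 x; rewrite /=; case: ifP => _; first by rewrite lexx.
  by case/andP.
rewrite [hitP _ _ _ n.+1 x]/= [hitP _ _ _ n.+2 x]/=.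
case: ifP => _; first by rewrite lexx.
rewrite !Kop_seq; try by move=> y; case/andP: (hit_bnd n.+1 y).
  by apply: ler_sum => y _; rewrite ler_wpM2l ?Kxy_ge0.
by move=> y; case/andP: (hit_bnd n y).
Qed.

Lemma hit_cvg x : hitP mu pi K n x @[n --> \oo] --> psiK mu pi K x.
Proof.
apply: nondecreasing_cvgn.
  by apply/nondecreasing_seqP => n; exact: hit_mono.
by exists 1 => _ [n _ <-]; case/andP: (hit_bnd n x).
Qed.

Lemma psi_bnd x : 0 <= psiK mu pi K x <= 1.
Proof.
have ub : has_ubound [set hitP mu pi K n x | n in [set: nat]].
  by exists 1 => _ [n _ <-]; case/andP: (hit_bnd n x).
apply/andP; split.
  apply: le_trans (ub_le_sup ub _); last by exists 0%N.
  by case/andP: (hit_bnd 0 x).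
apply: ge_sup; first by exists (hitP mu pi K 0 x), 0%N.
by move=> _ [n _ <-]; case/andP: (hit_bnd n x).
Qed.

Lemma psi_K x : K x -> psiK mu pi K x = 1.
Proof.
move=> Kx; apply/le_anti; rewrite (andP (psi_bnd x)).2 /=.
have ub : has_ubound [set hitP mu pi K n x | n in [set: nat]].
  by exists 1 => _ [n _ <-]; case/andP: (hit_bnd n x).
apply: le_trans (ub_le_sup ub _); last by exists 0%N.
by rewrite /= ifT //; apply/asboolP.
Qed.

Lemma sum_cvg (s0 : seq V) (w : V -> R) (g : nat -> V -> R) (L : V -> R) :
  (forall y, g n y @[n --> \oo] --> L y) ->
  \sum_(y <- s0) w y * g n y @[n --> \oo] --> \sum_(y <- s0) w y * L y.
Proof.
move=> h; elim: s0 => [|a s0 IH].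
  under eq_fun do rewrite big_nil.
  by rewrite big_nil; exact: cvg_cst.
under eq_fun do rewrite big_cons.
rewrite big_cons; apply: cvgD => //.
by apply: cvgM => //; exact: cvg_cst.
Qed.

Lemma psi_harm x : ~ K x ->
  psiK mu pi K x = \sum_(y <- s x) Kxy mu pi x y * psiK mu pi K y.
Proof.
move=> nKx.
have h1 := hit_cvg x; rewrite -cvg_shiftS /= in h1.
have e : (fun n => hitP mu pi K n.+1 x) =
         (fun n => \sum_(y <- s x) Kxy mu pi x y * hitP mu pi K n y).
  apply: funext => n /=; rewrite ifF; last by apply/asboolP.
  by rewrite Kop_seq // => y; case/andP: (hit_bnd n y).
have h2 := sum_cvg (s x) (Kxy mu pi x) (fun n y => hitP mu pi K n y)
  (psiK mu pi K) hit_cvg.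
rewrite e in h1.
exact: (cvg_unique _ h1 h2).
Qed.


Lemma hsum x : ~ K x ->
  1 - psiK mu pi K x = \sum_(z <- s x) Kxy mu pi x z * (1 - psiK mu pi K z).
Proof.
move=> nKx; rewrite (psi_harm x nKx) -{1}(Ksum x) -sumrB.
by apply: eq_bigr => z _; rewrite mulrBr mulr1.
Qed.

Lemma key x y : ~ K x -> adj mu x y ->
  Kxy mu pi x y * (1 - psiK mu pi K y) <= 1 - psiK mu pi K x.
Proof.
move=> nKx a.
have ys : y \in s x by apply/mem_s; right.
rewrite (hsum x nKx) (bigD1_seq y ys (uniq_s x)) /= lerDl.
apply: sumr_ge0 => z _; rewrite mulr_ge0 ?Kxy_ge0 // subr_ge0.
by case/andP: (psi_bnd z).
Qed.

Lemma gdist_joined (A : V -> V -> Prop) x y :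
  (exists k, joined A k x y) -> joined A (gdist A x y) x y.
Proof.
rewrite /gdist; case: (pselect _) => // e _.
by case: ex_minnP => m /asboolP.
Qed.

Lemma gdist_min (A : V -> V -> Prop) x y k :
  joined A k x y -> (gdist A x y <= k)%N.
Proof.
rewrite /gdist; case: (pselect _) => [e|ne] h; last by exfalso; apply: ne; exists k.
by case: ex_minnP => m _ hm; apply: hm; apply/asboolP.
Qed.

Definition ball x0 r := [set y | exists k, (k <= r)%N /\ joined (adj mu) k x0 y].

Lemma ball_fin x0 r : finite_set (ball x0 r).
Proof.
elim: r => [|r IH].
  apply: sub_finite_set (finite_set1 x0) => y [k [k0 [p [p0 [pk _]]]]].
  by move: k0 pk; rewrite leqn0 => /eqP -> <-; rewrite p0.
apply: (@sub_finite_set _ _ (ball x0 r `|` \bigcup_(z in ball x0 r) N z)).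
  move=> y [k [kr [p [p0 [pk pa]]]]].
  case: (leqP k r) => h; first by left; exists k; split => //; exists p.
  have ek : k = r.+1 by apply/eqP; rewrite eqn_leq kr h.
  right; exists (p r).
    exists r; split => //; exists p; split => //; split => // i ir.
    by apply: pa; rewrite ek ltnS ltnW.
  by rewrite /N /= -pk ek; apply: pa; rewrite ek.
rewrite finite_setU; split => //.
by apply: bigcup_finite => // z _; exact: N_fin.
Qed.

Lemma bdry_lem (conn : forall x y, exists k, joined (adj mu) k x y) a z :
  ~ K a -> K z -> exists b, bdry mu K b /\ (dist mu a b <= dist mu a z)%N.
Proof.
move=> nKa Kz.
have [q [q0 [qm qa]]] := gdist_joined (adj mu) a z (conn a z).
set m := gdist (adj mu) a z in qm qa.
have exK : exists i, `[< K (q i) >] by exists m; apply/asboolP; rewrite qm.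
case: (ex_minnP exK) => i /asboolP Kqi imin.
have im : (i <= m)%N by apply: imin; apply/asboolP; rewrite qm.
case: i Kqi imin im => [|i] Kqi imin im; first by exfalso; apply: nKa; rewrite -q0.
exists (q i.+1); split.
  split => //; exists (q i); split.
    by move=> Kq; have := imin i (introT (asboolP _) Kq); rewrite ltnn.
  by rewrite /adj msym; apply: qa.
apply: (@leq_trans i.+1) => //.
apply: gdist_min; exists q; split => //; split => // j ji.
by apply: qa; apply: leq_trans im.
Qed.

Lemma walk_nK k x y p : walk (adjG mu K) k x y p -> ~ K x ->
  forall i, (i <= k)%N -> ~ K (p i).
Proof.
move=> [p0 [pk pa]] nKx [|i] ik; first by rewrite p0.
by case: (pa i ik).
Qed.

Lemma walk_adj k x y p : walk (adjG mu K) k x y p -> joined (adj mu) k x y.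
Proof.
move=> [p0 [pk pa]]; exists p; split => //; split => // i ik.
by case: (pa i ik).
Qed.

Lemma chain k x y p : walk (adjG mu K) k x y p ->
  forall i, (i <= k)%N ->
  (1 / Cc) ^+ i * (1 - psiK mu pi K (p i)) <= 1 - psiK mu pi K x.
Proof.
move=> w; have [p0 [pk pa]] := w.
elim=> [|i IH] ik; first by rewrite expr0 mul1r p0.
have [a nKi nKi1] := pa i ik.
have h1 := key (p i) (p i.+1) nKi a.
have h2 : 1 / Cc <= Kxy mu pi (p i) (p i.+1).
  by rewrite Kxy_off ?adj_neq //; apply: ctrl.
have h3 : 1 / Cc * (1 - psiK mu pi K (p i.+1)) <= 1 - psiK mu pi K (p i).
  apply: le_trans h1; apply: ler_wpM2r => //.
  by rewrite subr_ge0; case/andP: (psi_bnd (p i.+1)).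
apply: le_trans (IH (ltnW ik)).
rewrite exprS -mulrA mulrCA; apply: ler_wpM2l => //.
by rewrite exprn_ge0 // divr_ge0 // ltW.
Qed.


Lemma part1 (iu : forall x y, ~ K x -> ~ K y ->
    exists k p, walk (adjG mu K) k x y p) :
  S_transient mu pi K -> harmonic_profile mu pi K (fun x => 1 - psiK mu pi K x).
Proof.
move=> [x0 hx0].
have nK0 : ~ K x0 by move=> /psi_K e; move: hx0; rewrite e ltxx.
split.
- move=> x nKx; rewrite subr_gt0.
  have [k [p w]] := iu x x0 nKx nK0.
  have [p0 [pk pa]] := w.
  rewrite lt_neqAle (andP (psi_bnd x)).2 andbT; apply/eqP => e1.
  suff : forall j, (j <= k)%N -> psiK mu pi K (p j) = 1.
    by move/(_ k (leqnn k)); rewrite pk => e; move: hx0; rewrite e ltxx.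
  elim=> [|j IH] jk; first by rewrite p0.
  have [a nKj nKj1] := pa j jk.
  have := key (p j) (p j.+1) nKj a.
  rewrite IH ?(ltnW jk) // subrr pmulr_rle0 ?Kxy_adj_gt0 // subr_le0 => h.
  by apply/le_anti; rewrite h (andP (psi_bnd _)).2.
- by move=> x Kx; rewrite psi_K // subrr.
- move=> x nKx; rewrite Kop_seq; first exact: hsum.
  by move=> z; rewrite subr_ge0; case/andP: (psi_bnd z).
Qed.

Lemma part2 (conn : forall x y, exists k, joined (adj mu) k x y)
  (infG : infinite_set (~` K)) (cu : R) (cugt0 : 0 < cu)
  (iu : forall x y, ~ K x -> ~ K y ->
      exists (k : nat) (p : nat -> V), [/\ walk (adjG mu K) k x y p,
        True &
        forall j, (j <= k)%N -> forall z, bdry mu K z ->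
          cu * (1 + (minn j (k - j))%:R) <= (dist mu (p j) z)%:R]) :
  unif_S_transient mu pi K ->
     exists eps : R, 0 < eps /\
       forall x, ~ K x -> eps <= 1 - psiK mu pi K x /\ 1 - psiK mu pi K x <= 1.
Proof.
move=> [L [eps [Lgt0 epsgt0 hL]]].
set J := Num.Def.archi_bound (L / cu).
have hJ : L / cu < J%:R by apply: archi_boundP; rewrite divr_ge0 // ltW.
have hJ2 : L < cu * J%:R.
  have e : L = cu * (L / cu) by rewrite mulrCA mulfV ?mulr1 // gt_eqF.
  by rewrite {1}e ltr_pM2l.
have Jgt0 : (0 < J)%N.
  rewrite lt0n; apply/eqP => J0; move: hJ2; rewrite J0 mulr0 => h.
  by move: (lt_trans Lgt0 h); rewrite ltxx.
have cgt0 : 0 < 1 / Cc by rewrite divr_gt0.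
exists ((1 / Cc) ^+ J * eps); split; first by rewrite mulr_gt0 // exprn_gt0.
move=> x nKx; split; last by case/andP: (psi_bnd x) => h _; lra.
have [y [nKy dy]] : exists y, ~ K y /\ (J.*2 <= dist mu x y)%N.
  apply: contrapT => hn; apply: infG.
  apply: sub_finite_set (ball_fin x J.*2) => y nKy /=.
  exists (dist mu x y); split; last exact: gdist_joined (conn x y).
  case: (leqP J.*2 (dist mu x y)) => h; last exact: ltnW.
  by exfalso; apply: hn; exists y; split.
have [k [p [w _ hb]]] := iu x y nKx nKy.
have kd : (dist mu x y <= k)%N by apply: gdist_min; exact: walk_adj w.
have Jk : (J <= k)%N by lia.
have mJ : minn J (k - J) = J by lia.
have nKa : ~ K (p J) by exact: walk_nK w nKx J Jk.
have dL : forall z, K z -> L <= (dist mu (p J) z)%:R.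
  move=> z Kz; have [b [bb db]] := bdry_lem conn (p J) z nKa Kz.
  have := hb J Jk b bb; rewrite mJ mulrDr mulr1 => h1.
  have h2 : ((dist mu (p J) b)%:R <= (dist mu (p J) z)%:R :> R) by rewrite ler_nat.
  lra.
have hpa := hL (p J) dL.
have := chain k x y p w J Jk.
have : (1 / Cc) ^+ J * eps <= (1 / Cc) ^+ J * (1 - psiK mu pi K (p J)).
  by apply: ler_wpM2l; [rewrite exprn_ge0 // ltW | lra].
move=> h3 h4; exact: le_trans h3 h4.
Qed.

End Setting.

Theorem lemma3p11 (R : realType) (V : choiceType) (mu : V -> V -> R) (pi : V -> R)
    (K : set V) :
  weighted_graph mu pi -> controlled mu pi -> uniformly_lazy mu pi ->
  harnack mu pi -> infinite_set (~` K) -> inner_uniform mu K ->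
  (S_transient mu pi K ->
     harmonic_profile mu pi K (fun x => 1 - psiK mu pi K x)) /\
  (unif_S_transient mu pi K ->
     exists eps : R, 0 < eps /\
       forall x, ~ K x -> eps <= 1 - psiK mu pi K x /\ 1 - psiK mu pi K x <= 1).
Proof.
move=> [msym [mge0 [mxx [pigt0 [mle [conn _]]]]]] [Cc [Ccgt0 ctrl]]
  [Ce [Cegt0 lazy]] _ infG [cu [CU [cugt0 _ iu]]].
split.
  apply: (@part1 R V mu pi mge0 mxx pigt0 mle Cc Ccgt0 ctrl Ce Cegt0 lazy K).
  move=> x y nKx nKy; have [k [p [w _ _]]] := iu x y nKx nKy.
  by exists k, p.
apply: (@part2 R V mu pi msym mge0 mxx pigt0 mle Cc Ccgt0 ctrl Ce Cegt0 lazy K conn infG cu cugt0).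
move=> x y nKx nKy; have [k [p [w _ hb]]] := iu x y nKx nKy.
by exists k, p; split.
Qed.
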